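(* Let $k\ge 1$ and $B=\{p_1,p_1',\dots,p_k,p_k'\}$ be $2k$ distinct vertices. Let $C_B$ be the cycle multi-graph on $B$ with edges $(p_1,p_1'),(p_1',p_2),(p_2,p_2'),\dots,(p_k,p_k'),(p_k',p_1)$, and let $\tilde C_B$ be obtained from $C_B$ by adding a second parallel copy of each edge $(p_i,p_i')$, $i\in[k]$ (so every vertex of $\tilde C_B$ has degree $3$). Let $\tilde E_B$ be a set of $k$ edges with endpoints in $B$ such that every vertex of $B$ is an endpoint of exactly one edge of $\tilde E_B$, and let $H_{(B,\tilde E_B)}$ be the $4$-regular multi-graph obtained from $\tilde C_B$ by adding the edges $\tilde E_B$. Let $G_B$ be the simple graph with vertex set $B$ and edges $\{(p_i,p_i'):i\in[k]\}$. Then for any Eulerian tour $U$ on $H_{(B,\tilde E_B)}$, $\mathcal{A}(U)=G_B$ if and only if $\tilde E_B=\{(p_i,p_i'): i\in[k]\}$.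
   Context: A tour is a closed walk without repeated edges; an Eulerian tour on a connected multi-graph $F$ is a tour using every edge of $F$ exactly once. If $F$ is a connected $4$-regular multi-graph on $n$ vertices and $U=x_1e_1x_2\dots x_{2n}e_{2n}x_1$ is an Eulerian tour, its induced double-occurrence word is $m(U)=x_1x_2\cdots x_{2n}$. The alternance graph $\mathcal{A}(U)$ is the simple graph on $V(F)$ in which $u\neq v$ are adjacent iff $u$ and $v$ alternate in $m(U)$, i.e. $m(U)$ has the form $\dots u\dots v\dots u\dots v\dots$ or $\dots v\dots u\dots v\dots u\dots$. *)

(* Defs.v *)
From mathcomp Require Import all_boot.
Set Implicit Arguments. Unset Strict Implicit. Unset Printing Implicit Defensive.

(* Vertex set B: (i,false) stands for p_i, (i,true) stands for p_i'. *)
Definition vert (k : nat) : finType := ('I_k * bool)%type.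

Definition p {k} (i : 'I_k) : vert k := (i, false).
Definition p' {k} (i : 'I_k) : vert k := (i, true).

(* Multi-graphs on a vertex type are given by a list of edges; each edge is
   the (unordered) set of its two endpoints. Parallel edges = repeated entries. *)

Definition C_B_edges (k : nat) : seq {set vert k} :=
  [seq [set p i; p' i] | i <- enum 'I_k] ++
  [seq [set p' i; p (ordS i)] | i <- enum 'I_k].

Definition tC_B_edges (k : nat) : seq {set vert k} :=
  C_B_edges k ++ [seq [set p i; p' i] | i <- enum 'I_k].

Definition H_edges (k : nat) (Et : {set {set vert k}}) : seq {set vert k} :=
  tC_B_edges k ++ enum Et.

(* Eulerian tour x_1 e_1 x_2 ... x_m e_m x_1 on the multigraph with edge list E:
   xs = [x_1;...;x_m], es = [e_1;...;e_m] (edge indices into E), every edge used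
   exactly once, and e_j joins x_j and x_{j+1} (indices cyclic). *)
Definition eulerian_tour (V : finType) (E : seq {set V}) (xs : seq V) (es : seq nat) : Prop :=
  perm_eq es (iota 0 (size E)) /\
  all2 (fun e xy => nth set0 E e == [set xy.1; xy.2]) es (zip xs (rot 1 xs)).

Definition alternate (V : eqType) (w : seq V) (u v : V) : Prop :=
  exists i j l m, [/\ i < j, j < l, l < m & m < size w] /\
   ((nth u w i = u /\ nth u w j = v /\ nth u w l = u /\ nth u w m = v) \/
    (nth u w i = v /\ nth u w j = u /\ nth u w l = v /\ nth u w m = u)).

(* Alternance graph of the tour whose induced double occurrence word is w. *)
Definition alternance (V : eqType) (w : seq V) (u v : V) : Prop :=
  u <> v /\ alternate w u v.

Definition G_B (k : nat) (u v : vert k) : Prop := u <> v /\ u.1 = v.1.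

Definition canon_match (k : nat) : {set {set vert k}} :=
  [set [set p i; p' i] | i : 'I_k].

(* Main.v *)
Require Import Defs.
From mathcomp Require Import all_boot zify.
Set Implicit Arguments. Unset Strict Implicit. Unset Printing Implicit Defensive.

Definition frame (V : finType) (E : seq {set V}) (n : nat) (y : nat -> V) :=
  [/\ 0 < n, (forall e, e \in E -> #|e| = 2), (forall t, y (t + n) = y t) &
      forall P : pred {set V}, count P E = count (fun t => P [set y t; y t.+1]) (iota 0 n)].

Lemma all2_map_eq (A B C : eqType) (f : A -> C) (g : B -> C) s t :
  all2 (fun a b => f a == g b) s t -> map f s = map g t.
Proof.
elim: s t => [|a s IH] [|b t] //= /andP[/eqP -> /IH ->] //.
Qed.

Lemma rot1_nth (T : Type) (x0 : T) (xs : seq T) :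
  0 < size xs ->
  rot 1 xs = map (fun t => nth x0 xs (t.+1 %% size xs)) (iota 0 (size xs)).
Proof.
case: xs => [|x s] // _.
rewrite rot1_cons; apply: (@eq_from_nth _ x0).
  by rewrite size_rcons size_map size_iota.
move=> i; rewrite size_rcons => hi.
rewrite (nth_map 0) ?size_iota // nth_iota // add0n nth_rcons.
rewrite /=; case: (ltngtP i (size s)) => [hlt|hgt|->].
- by rewrite modn_small.
- by move: hi; rewrite ltnS leqNgt hgt.
- by rewrite modnn.
Qed.

Lemma tour_frame (V : finType) (E : seq {set V}) xs es (x0 : V) :
  (forall e, e \in E -> #|e| = 2) -> 0 < size xs -> eulerian_tour E xs es ->
  frame E (size xs) (fun t => nth x0 xs (t %% size xs)).
Proof.
move=> E2 hn [hp ha].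
set n := size xs; set y := fun t => nth x0 xs (t %% n).
have hxs : xs = map y (iota 0 n).
  rewrite -{1}(mkseq_nth x0 xs) /mkseq; apply/eq_in_map => t.
  rewrite mem_iota add0n /y => /andP[_ ht]; by rewrite modn_small.
split => //.
  by move=> t; rewrite /y modnDr.
move=> P.
have h1 : map (nth set0 E) es = map (fun xy => [set xy.1; xy.2]) (zip xs (rot 1 xs)).
  apply: all2_map_eq; exact: ha.
rewrite -{1}(mkseq_nth set0 E) /mkseq.
rewrite -((permP (perm_map (nth set0 E) hp)) P) h1.
rewrite {1}hxs (rot1_nth x0 hn) -/n zip_map !count_map; apply: eq_count => t /=.
rewrite /y /=.
by [].
Qed.

Definition ch (f : nat -> bool) a b := count (fun t => f t != f t.+1) (iota a (b - a)).

Lemma ch_split f a b c : a <= b -> b <= c -> ch f a c = ch f a b + ch f b c.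
Proof.
move=> hab hbc; rewrite /ch -count_cat.
have -> : iota b (c - b) = iota (a + (b - a)) (c - b) by rewrite subnKC.
rewrite -iotaD; congr (count _ (iota _ _)); lia.
Qed.

Lemma ch_ge1 f a b : a <= b -> f a != f b -> 1 <= ch f a b.
Proof.
elim: b => [|b IH]; first by rewrite leqn0 => /eqP ->; rewrite eqxx.
rewrite leq_eqVlt => /orP[/eqP ->|hab]; first by rewrite eqxx.
rewrite ltnS in hab.
move=> hne; rewrite (@ch_split f a b b.+1) //.
case: (boolP (f a == f b)) => [/eqP e|ne].
  rewrite /ch subSnn /= addn0; rewrite -e hne; lia.
by have := IH hab ne; lia.
Qed.

Lemma ch_const f a b : (forall t, a <= t <= b -> f t = f a) -> ch f a b = 0.
Proof.
move=> h; rewrite /ch; apply/eqP; rewrite -leqn0 leqNgt -has_count; apply/hasP => [[t]].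
rewrite mem_iota => /andP[h1 h2]; rewrite (h t) ?h //; [by rewrite eqxx| lia | lia].
Qed.

Lemma ch_le1 f a : ch f a a.+1 <= 1.
Proof. by rewrite /ch subSnn /=; case: (_ != _). Qed.

Lemma ch_four f n i j l m : i < j -> j < l -> l < m -> m < n -> f n = f 0 ->
  f i != f j -> f j != f l -> f l != f m -> f m != f i -> 4 <= ch f 0 n.
Proof.
move=> hij hjl hlm hmn hn h1 h2 h3 h4.
rewrite (@ch_split f 0 i n); [|lia|lia].
rewrite (@ch_split f i j n); [|lia|lia].
rewrite (@ch_split f j l n); [|lia|lia].
rewrite (@ch_split f l m n); [|lia|lia].
have := ch_ge1 (ltnW hij) h1; have := ch_ge1 (ltnW hjl) h2; have := ch_ge1 (ltnW hlm) h3.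
have : 1 <= ch f 0 i + ch f m n.
  case: (boolP (f m == f n)) => [/eqP e|ne]; last by have := ch_ge1 (ltnW hmn) ne; lia.
  have : f 0 != f i by rewrite -hn -e.
  by move/(ch_ge1 (leq0n i)); lia.
lia.
Qed.

Lemma ch_two (f : nat -> bool) n a b : 0 < a -> a < b -> b <= n ->
  (forall t, t < a -> f t) -> (forall t, a <= t < b -> ~~ f t) -> (forall t, b <= t <= n -> f t) ->
  ch f 0 n <= 2.
Proof.
move=> ha hab hbn h1 h2 h3.
rewrite (@ch_split f 0 a.-1 n); [|lia|lia].
rewrite (@ch_split f a.-1 a n); [|lia|lia].
rewrite (@ch_split f a b.-1 n); [|lia|lia].
rewrite (@ch_split f b.-1 b n); [|lia|lia].
rewrite (@ch_const f 0 a.-1); last first.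
  by move=> t ht; rewrite !h1 //; lia.
rewrite (@ch_const f a b.-1); last first.
  move=> t ht; rewrite (negbTE (h2 t _)) ?(negbTE (h2 a _)) //; lia.
rewrite (@ch_const f b n); last first.
  by move=> t ht; rewrite !h3 //; lia.
have := @ch_le1 f a.-1; have := @ch_le1 f b.-1.
rewrite !prednK //; [lia|lia].
Qed.

Definition altY (V : eqType) n (y : nat -> V) u v :=
  exists i j l m, [/\ i < j, j < l, l < m & m < n] /\
   ((y i = u /\ y j = v /\ y l = u /\ y m = v) \/
    (y i = v /\ y j = u /\ y l = v /\ y m = u)).

Lemma altY_sym (V : eqType) n (y : nat -> V) u v : altY n y u v -> altY n y v u.
Proof. by move=> [i [j [l [m [h [H|H]]]]]]; exists i, j, l, m; split => //; [right|left]. Qed.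

Lemma altY_shift1 (V : eqType) n (y : nat -> V) u v : y n = y 0 ->
  altY n y u v <-> altY n (fun t => y t.+1) u v.
Proof.
move=> hn; split.
- move=> [i [j [l [m [[h1 h2 h3 h4] H]]]]].
  case: i h1 H => [|i] h1 H.
  + exists j.-1, l.-1, m.-1, n.-1; split; first by split; lia.
    rewrite !prednK; [|lia|lia|lia|lia]; rewrite hn.
    by case: H => [[a [b [c d]]]|[a [b [c d]]]]; [right|left].
  + exists i, j.-1, l.-1, m.-1; split; first by split; lia.
    by rewrite !prednK; [|lia|lia|lia].
- move=> [i [j [l [m [[h1 h2 h3 h4] H]]]]].
  case: (ltngtP m.+1 n) => [hm||hm]; [|lia|].
  + by exists i.+1, j.+1, l.+1, m.+1; split; first by split; lia.
  + exists 0, i.+1, j.+1, l.+1; split; first by split; lia.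
    rewrite -hn -hm.
    by case: H => [[a [b [c d]]]|[a [b [c d]]]]; [right|left].
Qed.

Lemma altY_ext (V : eqType) n (y y' : nat -> V) u v : y =1 y' ->
  altY n y u v -> altY n y' u v.
Proof.
move=> e [i [j [l [m [h H]]]]]; exists i, j, l, m; split => //; rewrite -!e //.
Qed.

Lemma altY_shift (V : eqType) n (y : nat -> V) u v r : (forall t, y (t + n) = y t) ->
  altY n y u v <-> altY n (fun t => y (t + r)) u v.
Proof.
move=> hp; elim: r => [|r IH].
  by split; apply: altY_ext => t; rewrite addn0.
rewrite IH (altY_shift1 (y := fun t => y (t + r))); last by rewrite add0n addnC hp.
by split; apply: altY_ext => t; rewrite addSnnS.
Qed.

Lemma count_iota_shift (g : nat -> bool) n r : (forall t, g (t + n) = g t) ->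
  count g (iota r n) = count g (iota 0 n).
Proof.
move=> hp; elim: r => [//|r <-].
case: n hp => [//|n] hp.
have -> : iota r.+1 n.+1 = iota r.+1 n ++ [:: r.+1 + n] by rewrite -(addn1 n) iotaD.
rewrite count_cat /= addn0 addSnnS hp; lia.
Qed.

Definition cross (V : finType) (X : {set V}) (e : {set V}) :=
  [exists a in e, a \in X] && [exists a in e, a \notin X].

Lemma cross_set2 (V : finType) (X : {set V}) a b :
  cross X [set a; b] = ((a \in X) != (b \in X)).
Proof.
rewrite /cross; case: (boolP (a \in X)) => ha; case: (boolP (b \in X)) => hb /=.
- apply/negbTE; rewrite negb_and; apply/orP; right; apply/existsP => [[c /andP[/set2P [->|->]]]].
  by rewrite ha. by rewrite hb.
- apply/andP; split; apply/existsP; [exists a|exists b]; by rewrite !inE eqxx ?orbT.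
- apply/andP; split; apply/existsP; [exists b|exists a]; by rewrite !inE eqxx ?orbT.
- apply/negbTE; rewrite negb_and; apply/orP; left; apply/existsP => [[c /andP[/set2P [->|->]]]].
  by rewrite (negbTE ha). by rewrite (negbTE hb).
Qed.

Section Frame.
Variables (V : finType) (E : seq {set V}) (n : nat) (y : nat -> V).
Hypothesis hf : frame E n y.

Lemma f_n0 : 0 < n. Proof. by case: hf. Qed.
Lemma f_E2 e : e \in E -> #|e| = 2. Proof. by case: hf => _ h _ _; apply: h. Qed.
Lemma f_per t : y (t + n) = y t. Proof. by case: hf. Qed.
Lemma f_cnt (P : pred {set V}) : count P E = count (fun t => P [set y t; y t.+1]) (iota 0 n).
Proof. by case: hf => _ _ _ ->. Qed.

Lemma f_perq r q : y (r + q * n) = y r.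
Proof. by elim: q => [|q IH]; rewrite ?addn0 // mulSn [n + _]addnC addnA f_per. Qed.

Lemma f_mod t : y t = y (t %% n).
Proof. by rewrite {1}(divn_eq t n) addnC f_perq. Qed.

Lemma f_edge t : [set y t; y t.+1] \in E.
Proof.
have : 0 < count (pred1 [set y t; y t.+1]) E.
  rewrite f_cnt -has_count; apply/hasP; exists (t %% n).
    by rewrite mem_iota add0n ltn_mod f_n0.
  have e : y (t %% n).+1 = y t.+1.
    by rewrite (f_mod (t %% n).+1) (f_mod t.+1) -addn1 -(addn1 t) modnDml.
  by rewrite /= e -f_mod.
by rewrite -has_count => /hasP [e he /eqP <-].
Qed.

Lemma f_neq t : y t != y t.+1.
Proof. by have := f_E2 (f_edge t); rewrite cards2; case: (_ != _). Qed.

Lemma f_edge_pos e : e \in E -> exists2 t, t < n & e = [set y t; y t.+1].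
Proof.
move=> he; have : 0 < count (pred1 e) E by rewrite -has_count; apply/hasP; exists e => //=.
rewrite f_cnt -has_count => /hasP [t]; rewrite mem_iota add0n => ht /eqP <-.
by exists t.
Qed.

Definition cnt (v : V) := count (fun t => y t == v) (iota 0 n).

Lemma f_deg (v : V) : count (fun e : {set V} => v \in e) E = (cnt v).*2.
Proof.
rewrite f_cnt -addnn.
have e : cnt v = count (fun t => y t.+1 == v) (iota 0 n).
  rewrite /cnt -(@count_iota_shift (fun t => y t == v) n 1); last by move=> t; rewrite f_per.
  by rewrite (iotaDl 1 0) count_map.
rewrite {2}e /cnt -count_predUI.
have -> : count (predI (fun t => y t == v) (fun t => y t.+1 == v)) (iota 0 n) = 0.
  apply/eqP; rewrite -leqn0 leqNgt -has_count; apply/hasP => [[t _ /andP[/eqP h1 /eqP h2]]].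
  by have := f_neq t; rewrite h1 h2 eqxx.
rewrite addn0; apply: eq_count => t /=; rewrite !inE eq_sym; congr orb; by rewrite eq_sym.
Qed.

Lemma cnt_filter v : size [seq t <- iota 0 n | y t == v] = cnt v.
Proof. by rewrite size_filter. Qed.

Lemma f_other v p : cnt v = 2 -> p < n -> y p = v -> exists q, [/\ q < n, q != p & y q = v].
Proof.
move=> hc hp hy.
case: (boolP [exists q : 'I_n, (y q == v) && (q != p :> nat)]).
  by move=> /existsP [q /andP [/eqP h1 h2]]; exists q.
rewrite negb_exists => /forallP hq.
have : size [seq t <- iota 0 n | y t == v] <= size [:: p].
  apply: uniq_leq_size; first by rewrite filter_uniq ?iota_uniq.
  move=> t; rewrite mem_filter mem_iota add0n => /andP [/eqP h1 h2].
  have := hq (Ordinal h2); rewrite /= h1 eqxx /= negbK => /eqP ->; by rewrite inE.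
by rewrite cnt_filter hc.
Qed.

Lemma f_only v p q : cnt v = 2 -> p < q -> q < n -> y p = v -> y q = v ->
  forall t, t < n -> y t = v -> t = p \/ t = q.
Proof.
move=> hc hpq hq hp hq' t ht hy.
case: (eqVneq t p) => [->|hp']; first by left.
case: (eqVneq t q) => [->|hq'']; first by right.
have : size [:: p; q; t] <= size [seq t <- iota 0 n | y t == v].
  apply: uniq_leq_size.
    by rewrite /= !inE negb_or (ltn_eqF hpq) /= ![_ == t]eq_sym hp' hq''.
  move=> s; rewrite !inE mem_filter mem_iota add0n => /orP[/eqP ->|/orP[/eqP->|/eqP->]].
  - by rewrite hp eqxx /=; lia.
  - by rewrite hq' eqxx /=.
  - by rewrite hy eqxx /=.
by rewrite cnt_filter hc.
Qed.

Lemma f_cross X : count (cross X) E = ch (fun t => y t \in X) 0 n.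
Proof. by rewrite f_cnt /ch subn0; apply: eq_count => t; rewrite cross_set2. Qed.

End Frame.

Lemma frame_shift (V : finType) (E : seq {set V}) n y r :
  frame E n y -> frame E n (fun t => y (t + r)).
Proof.
move=> hf; split; [exact: f_n0 hf|exact: f_E2 hf| by move=> t; rewrite addnAC (f_per hf) |].
move=> P; rewrite (f_cnt hf).
rewrite -(@count_iota_shift (fun t => P [set y t; y t.+1]) n r); last first.
  by move=> t; rewrite (f_per hf) -addSn (f_per hf).
rewrite -{1}[r]addn0 iotaDl count_map; apply: eq_count => t /=.
by rewrite addnC addSn.
Qed.

Lemma set2_inv (V : finType) (v w a b : V) : v != w -> [set v; w] = [set a; b] ->
  (a = v /\ b = w) \/ (a = w /\ b = v).
Proof.
move=> hvw e.
have ha : a \in [set v; w] by rewrite e !inE eqxx.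
have hb : b \in [set v; w] by rewrite e !inE eqxx orbT.
have hv : v \in [set a; b] by rewrite -e !inE eqxx.
have hw : w \in [set a; b] by rewrite -e !inE eqxx orbT.
move: ha hb hv hw; rewrite !inE => /orP[/eqP ea|/eqP ea] /orP[/eqP eb|/eqP eb]; subst a b.
- by rewrite (eq_sym w v) (negbTE hvw).
- by auto.
- by auto.
- by rewrite (negbTE hvw).
Qed.

Section Arc.
Variables (V : finType) (E : seq {set V}) (n : nat) (y : nat -> V).
Hypothesis hf : frame E n y.
Variable X : {set V}.
Hypothesis hy0 : y 0 \in X.
Hypothesis hc : forall v, cnt n y v = 2.
Hypothesis hii : forall u w, u \in X -> w \notin X -> ~ altY n y u w.
Hypothesis hi : forall c d, c \in X -> d \in X -> c != d -> altY n y c d.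
Hypothesis conn : forall S : V -> Prop, (exists v, v \notin X /\ S v) ->
  (forall v w, S v -> w \notin X -> [set v; w] \in E -> S w) -> forall w, w \notin X -> S w.

Lemma only2 v p q t : p != q -> p < n -> q < n -> y p = v -> y q = v -> t < n -> y t = v ->
  t = p \/ t = q.
Proof.
move=> hpq hp hq h1 h2 ht h3.
case: (ltngtP p q) hpq => [lt|lt|e] //.
- by move=> _; apply: (f_only (hc v) lt hq h1 h2 ht h3).
- by move=> _; case: (f_only (hc v) lt hp h2 h1 ht h3) => ->; auto.
Qed.

Lemma sep v t s t' : v \notin X -> 0 < t -> t < s -> s < t' -> t' < n ->
  y t = v -> y t' = v -> y s \in X -> False.
Proof.
move=> hv h0 hts hst ht'n ht ht' hs.
set c := y 0; set d := y s.
have hvX : forall z, z \in X -> z != v by move=> z hz; apply/eqP => e; rewrite -e hz in hv.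
case: (eqVneq c d) => [ecd|ncd].
  apply: (hii hy0 hv); exists 0, t, s, t'; split; first by split; lia.
  by left; rewrite -/c ecd.
have [s2 [hs2n hs2s hs2]] := f_other (hc d) (ltn_trans hst ht'n) (erefl _).
have hs2t : s2 != t by apply/eqP => e; move: (hvX _ hs); rewrite -/d -hs2 e ht eqxx.
have hs2t' : s2 != t' by apply/eqP => e; move: (hvX _ hs); rewrite -/d -hs2 e ht' eqxx.
case: (ltngtP s2 t) hs2t => [lt|gt|] // _.
  by apply: (hii hs hv); exists s2, t, s, t'; split; [split; lia | left].
case: (ltngtP s2 t') hs2t' => [lt'|gt'|] // _; last first.
  by apply: (hii hs hv); exists t, s, t', s2; split; [split; lia | right].
have [r [hrn hr0 hr]] := f_other (hc c) (f_n0 hf) (erefl _).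
case: (boolP ((t < r) && (r < t'))) => [/andP[h1 h2]|hr'].
  by apply: (hii hy0 hv); exists 0, t, r, t'; split; [split; lia | left].
have hr0' : 0 < r by lia.
have [i1 [j1 [l1 [m1 [[a1 a2 a3 a4] H]]]]] := hi hy0 hs ncd.
have oc := f_only (hc c) hr0' hrn (erefl _) hr.
have od := only2 hs2s hs2n (ltn_trans hst ht'n) hs2 (erefl _).
case: H => [[b1 [b2 [b3 b4]]]|[b1 [b2 [b3 b4]]]].
- have := oc i1 (ltn_trans a1 (ltn_trans a2 (ltn_trans a3 a4))) b1.
  have := oc l1 (ltn_trans a3 a4) b3.
  have := od j1 (ltn_trans a2 (ltn_trans a3 a4)) b2.
  have := od m1 a4 b4.
  lia.
- have := oc j1 (ltn_trans a2 (ltn_trans a3 a4)) b2.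
  have := oc m1 a4 b4.
  lia.
Qed.

Lemma arc : ch (fun t => y t \in X) 0 n <= 2.
Proof.
have hn := f_n0 hf.
have hyn : y n = y 0 by rewrite -(f_per hf 0) add0n.
case: (boolP [exists t : 'I_n, y t \notin X]) => [/existsP [t0' ht0']|]; last first.
  rewrite negb_exists => /forallP hall.
  rewrite (@ch_const _ 0 n) //; move=> t /= ht; rewrite hy0.
  case: (ltngtP t n) ht => [lt|gt|->] //; last by rewrite hyn.
  by have := hall (Ordinal lt); rewrite negbK.
have exP : exists t, (t < n) && (y t \notin X) by exists t0'; rewrite ltn_ord.
have [t0 /andP [ht0n ht0X] min0] := find_ex_minn exP.
have hlow : forall t, t < t0 -> y t \in X.
  move=> t ht; case: (boolP (y t \in X)) => // hX.
  have := min0 t; rewrite hX (ltn_trans ht ht0n) => /(_ erefl); lia.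
have ht0pos : 0 < t0 by case: (posnP t0) ht0X => // ->; rewrite hy0.
have exT : exists t, (t0 < t) && (y t \in X) by exists n; rewrite ht0n hyn hy0.
have [T /andP [hT0 hTX] minT] := find_ex_minn exT.
have hTn : T <= n by apply: minT; rewrite ht0n hyn hy0.
have hmid : forall t, t0 <= t < T -> y t \notin X.
  move=> t /andP [h1 h2]; case: (ltngtP t0 t) h1 => [lt|//|<-] _ //.
  case: (boolP (y t \in X)) => // hX.
  have := minT t; rewrite hX lt => /(_ erefl); lia.
pose S v := exists t, t0 <= t < T /\ y t = v.
have K : forall v, S v -> forall t, t < n -> y t = v -> t0 <= t < T.
  move=> v [t1 [ht1 e1]] t ht e.
  have hv : v \notin X by rewrite -e1 hmid.
  case: (ltnP t t0) => h1.
    by move: (hlow t h1); rewrite e (negbTE hv).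
  case: (ltnP t T) => h2 //.
  exfalso; apply: (sep hv (t := t1) (s := T) (t' := t)) => //.
  - by move/andP: ht1 => [a _]; apply: leq_trans a.
  - by case/andP: ht1.
  - rewrite ltn_neqAle h2 andbT; apply/eqP => eT; move: hTX; by rewrite eT e (negbTE hv).
have clos : forall v w, S v -> w \notin X -> [set v; w] \in E -> S w.
  move=> v w Sv hw hE.
  have hv : v \notin X by case: Sv => t [ht <-]; apply: hmid.
  have [t ht e] := f_edge_pos hf hE.
  have hvw : v != w by have := f_E2 hf hE; rewrite cards2; case: (_ != _).
  case: (set2_inv hvw e) => [[e1 e2]|[e1 e2]].
  - have := K v Sv t ht e1 => /andP [k1 k2].
    exists t.+1; split => //; apply/andP; split; first by lia.
    rewrite ltn_neqAle k2 andbT; apply/eqP => eT; move: hTX; by rewrite -eT e2 (negbTE hw).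
  - have htn : t.+1 < n.
      rewrite ltn_neqAle ht andbT; apply/eqP => eT; move: hy0; by rewrite -hyn -eT e2 (negbTE hv).
    have := K v Sv t.+1 htn e2 => /andP [k1 k2].
    exists t; split => //; apply/andP; split; last by lia.
    rewrite leq_eqVlt in k1; case/orP: k1 => [/eqP et|]; last by [].
    by move: (hlow t); rewrite et ltnSn e1 (negbTE hw) => /(_ erefl).
have allS : forall w, w \notin X -> S w.
  apply: conn => //; exists (y t0); split => //; exists t0; split => //.
  by rewrite leqnn hT0.
apply: (@ch_two _ n t0 T) => //.
move=> t /andP [h1 h2].
case: (ltngtP t n) h2 => [lt|//|->] _; last by rewrite hyn.
case: (boolP (y t \in X)) => // hX.
have := K _ (allS _ hX) t lt erefl; lia.
Qed.

End Arc.

Lemma cnt_pos (V : finType) n (y : nat -> V) v : 0 < cnt n y v -> exists2 p, p < n & y p = v.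
Proof.
rewrite /cnt -has_count => /hasP [p]; rewrite mem_iota add0n => hp /eqP e; by exists p.
Qed.

Lemma alt_block_core (V : finType) (E : seq {set V}) n y (a b : V) q q' :
  frame E n y -> 3 <= n -> a != b -> q < n -> q' < n -> q' != q -> y q = a -> y q' = a ->
  [set y q; y q.+1] = [set a; b] ->
  [set y (if q == 0 then n.-1 else q.-1); y q] = [set a; b] -> altY n y a b.
Proof.
move=> hf hn hab hq hq' hqq yq yq' h1 h2.
have hyn : y n = y 0 by rewrite -(f_per hf 0) add0n.
have yq1 : y q.+1 = b.
  by case: (set2_inv hab (esym h1)) => [[_ ->]|[e _]] //; move: hab; rewrite -e yq eqxx.
have ypr : y (if q == 0 then n.-1 else q.-1) = b.
  case: (set2_inv hab (esym h2)) => [[e1 e2]|[e1 e2]] //; move: hab; by rewrite -e2 yq eqxx.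
have hba : forall t, y t = b -> q' != t by move=> t e; apply/eqP => et; move: hab; rewrite -e -et yq' eqxx.
case: (eqVneq q 0) ypr => [eq0|nq0] /= ypr.
- have h1' : q' != 1 by apply: hba; rewrite -yq1 eq0.
  have h2' : q' != n.-1 by apply: hba.
  exists 0, 1, q', n.-1; split; first by split; lia.
  by left; move: yq yq1; rewrite eq0 => -> ->.
- case: (ltngtP q.+1 n) => [lt|gt|eqn]; [|lia|].
  + have h1' : q' != q.+1 by apply: hba.
    have h2' : q' != q.-1 by apply: hba.
    case: (ltngtP q' q) => [lt'|gt'|e]; last by move: hqq; rewrite e eqxx.
    * exists q', q.-1, q, q.+1; split; first by split; lia.
      by left.
    * exists q.-1, q, q.+1, q'; split; first by split; lia.
      by right.
  + have h1' : q' != 0 by apply: hba; rewrite -hyn -eqn.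
    have h2' : q' != q.-1 by apply: hba.
    exists 0, q', q.-1, q; split; first by split; lia.
    by right; rewrite -hyn -eqn.
Qed.

Lemma alt_block (V : finType) (E : seq {set V}) n y (a b : V) :
  frame E n y -> 3 <= n -> a != b -> cnt n y a = 2 ->
  3 <= count (pred1 [set a; b]) E -> altY n y a b.
Proof.
move=> hf hn hab hca hcE.
have hyn : y n = y 0 by rewrite -(f_per hf 0) add0n.
have [p0 hp0 yp0] := cnt_pos (ltac:(by rewrite hca) : 0 < cnt n y a).
have [p1 [hp1 hp10 yp1]] := f_other hca hp0 yp0.
pose hit t := [set y t; y t.+1] == [set a; b].
pose pr q := if q == 0 then n.-1 else q.-1.
have prS : forall q, q < n -> y (pr q).+1 = y q.
  move=> q hq; rewrite /pr; case: (eqVneq q 0) => [->|nq]; first by rewrite prednK ?hyn //; lia.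
  by rewrite prednK //; lia.
have key : forall q1 q2, q1 < q2 -> q2 < n -> y q1 = a -> y q2 = a ->
    (hit q1 && hit (pr q1)) || (hit q2 && hit (pr q2)).
  move=> q1 q2 h12 h2n y1 y2.
  apply/negPn/negP => /norP [n1 n2].
  pose c1 := if hit q1 then q1 else pr q1.
  pose c2 := if hit q2 then q2 else pr q2.
  have : size [seq t <- iota 0 n | hit t] <= size [:: c1; c2].
    apply: uniq_leq_size; first by rewrite filter_uniq ?iota_uniq.
    move=> t; rewrite mem_filter mem_iota add0n => /andP [ht htn].
    have : a \in [set y t; y t.+1] by rewrite (eqP ht) !inE eqxx.
    rewrite !inE => /orP [/eqP ea|/eqP ea].
    + case: (f_only hca h12 h2n y1 y2 htn (esym ea)) => et; subst t.
      * by rewrite /c1 ht eqxx.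
      * by rewrite /c2 ht eqxx orbT.
    + have : t = pr q1 \/ t = pr q2.
        case: (ltngtP t.+1 n) => [lt|//|eq]; [|lia|].
        * case: (f_only hca h12 h2n y1 y2 lt (esym ea)) => e; [left|right];
            rewrite /pr -e //.
        * have : y 0 = a by rewrite -hyn -eq.
          move=> y0; case: (f_only hca h12 h2n y1 y2 (leq_ltn_trans (leq0n t) htn) y0) => e;
            [left|right]; by rewrite /pr -e eqxx -eq.
      case=> et; rewrite et in ht *.
      * rewrite /c1; case: (boolP (hit q1)) => h; last by rewrite eqxx.
        by move: n1; rewrite h ht.
      * rewrite /c2; case: (boolP (hit q2)) => h; last by rewrite eqxx orbT.
        by move: n2; rewrite h ht.
  rewrite size_filter.
  have -> : count [eta hit] (iota 0 n) = count (pred1 [set a; b]) E by rewrite (f_cnt hf).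
  by move=> h; have := leq_trans hcE h.
have [q [q' [[hq hq' hqq'] [yq yq' h1 h2]]]] : exists q q', [/\ q < n, q' < n & q' != q] /\
    [/\ y q = a, y q' = a, hit q & hit (pr q)].
  case: (ltngtP p0 p1) hp10 => [lt|lt|e] // _.
  - case/orP: (key _ _ lt hp1 yp0 yp1) => /andP [u1 u2].
    + by exists p0, p1; split; split => //; rewrite gtn_eqF.
    + by exists p1, p0; split; split => //; rewrite ltn_eqF.
  - case/orP: (key _ _ lt hp0 yp1 yp0) => /andP [u1 u2].
    + by exists p1, p0; split; split => //; rewrite gtn_eqF.
    + by exists p0, p1; split; split => //; rewrite ltn_eqF.
apply: (@alt_block_core _ E n y a b q q') => //.
  exact/eqP.
rewrite -(prS q hq); exact/eqP.
Qed.

Lemma count_le_r (T : eqType) (P : pred T) s r : uniq s ->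
  (forall x, x \in s -> P x -> x \in r) -> count P s <= size r.
Proof.
move=> us h; rewrite -size_filter; apply: uniq_leq_size; first by rewrite filter_uniq.
by move=> x; rewrite mem_filter => /andP [a b]; apply: h.
Qed.

Lemma count_ge_r (T : eqType) (P : pred T) s r : uniq r ->
  (forall x, x \in r -> x \in s /\ P x) -> size r <= count P s.
Proof.
move=> ur h; rewrite -size_filter; apply: uniq_leq_size => // x hx.
by have [a b] := h x hx; rewrite mem_filter a b.
Qed.

Lemma count1 (T : eqType) (P : pred T) s x : uniq s -> x \in s ->
  (forall z, z \in s -> P z = (z == x)) -> count P s = 1.
Proof.
move=> us xs h; apply/eqP; rewrite eqn_leq; apply/andP; split.
  by apply: (@count_le_r _ _ _ [:: x]) => // z hz; rewrite h // inE.
by apply: (@count_ge_r _ _ _ [:: x]) => // z; rewrite inE => /eqP ->; rewrite h // eqxx.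
Qed.

Lemma uniqT (T : finType) : uniq (Finite.enum T).
Proof. by rewrite -enumT enum_uniq. Qed.
Lemma memT (T : finType) (x : T) : x \in Finite.enum T.
Proof. by rewrite -enumT mem_enum. Qed.

Section G.
Variable k : nat.
Hypothesis hk : 0 < k.
Variable Et : {set {set vert k}}.

Definition Aed := [seq [set p i; p' i] | i <- enum 'I_k].
Definition Bed := [seq [set p' i; p (ordS i)] | i <- enum 'I_k].

Lemma H_edgesE (Et0 : {set {set vert k}}) : H_edges Et0 = Aed ++ Bed ++ Aed ++ enum Et0.
Proof. by rewrite /H_edges /tC_B_edges /C_B_edges -!catA. Qed.

Lemma p_neq (i j : 'I_k) : p i != p' j.
Proof. by rewrite /p /p' xpair_eqE andbF. Qed.

Lemma memA i : [set p i; p' i] \in H_edges Et.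
Proof. by rewrite H_edgesE mem_cat; apply/orP; left; apply/mapP; exists i; rewrite ?mem_enum. Qed.

Lemma memB i : [set p' i; p (ordS i)] \in H_edges Et.
Proof. by rewrite H_edgesE mem_cat; apply/orP; right; rewrite mem_cat; apply/orP; left; apply/mapP; exists i; rewrite ?mem_enum. Qed.

Lemma E2H (hE2 : forall e, e \in Et -> #|e| = 2) e : e \in H_edges Et -> #|e| = 2.
Proof.
rewrite H_edgesE !mem_cat => /orP [|/orP [|/orP [|]]].
- by move=> /mapP [i _ ->]; rewrite cards2 p_neq.
- by move=> /mapP [i _ ->]; rewrite cards2 eq_sym p_neq.
- by move=> /mapP [i _ ->]; rewrite cards2 p_neq.
- by rewrite mem_enum; apply: hE2.
Qed.

Lemma sizeH (hc : #|Et| = k) : size (H_edges Et) = 4 * k.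
Proof. by rewrite H_edgesE !size_cat !size_map -!enumT !size_enum_ord -cardE hc; lia. Qed.

Lemma memp2 (v : vert k) i : (v \in [set p i; p' i]) = (v.1 == i).
Proof. by case: v => j b; rewrite !inE /p /p' !xpair_eqE /=; case: b; rewrite ?andbT ?andbF ?orbF. Qed.

Lemma degH (hcov : forall v : vert k, #|[set e in Et | v \in e]| = 1) (v : vert k) :
  count (fun e : {set vert k} => v \in e) (H_edges Et) = 4.
Proof.
have hA : count (fun e : {set vert k} => v \in e) Aed = 1.
  rewrite count_map; apply: (count1 (x := v.1)); rewrite ?uniqT ?memT ?enum_uniq ?mem_enum // => z _.
  by rewrite /= memp2 eq_sym.
have hB : count (fun e : {set vert k} => v \in e) Bed = 1.
  rewrite count_map; apply: (count1 (x := if v.2 then v.1 else ord_pred v.1));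
    rewrite ?uniqT ?memT ?enum_uniq ?mem_enum // => z _.
  clear hA; case: v => j [] /=; rewrite !inE /p /p' !xpair_eqE /= ?andbT ?andbF ?orbF //.
  rewrite /=; apply/eqP/eqP => [->|->]; by rewrite ?ordSK ?ord_predK.
have hE : count (fun e : {set vert k} => v \in e) (enum Et) = 1.
  have /cards1P [e he] : #|[set e in Et | v \in e]| == 1 by rewrite hcov.
  have heEt : e \in Et.
    have : e \in [set e in Et | v \in e] by rewrite he set11.
    by rewrite inE => /andP [].
  apply: (count1 (x := e)); rewrite ?enum_uniq ?mem_enum //.
  move=> z; rewrite mem_enum => hz /=.
  have : (z \in [set e in Et | v \in e]) = (z == e) by rewrite he inE.
  by rewrite inE hz.
by rewrite H_edgesE !count_cat hA hB hE.
Qed.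

Definition Xb (i : 'I_k) : {set vert k} := [set v | v.1 == i].

Lemma cross_canon (i : 'I_k) : count (cross (Xb i)) (H_edges (canon_match k)) <= 2.
Proof.
have hA : count (cross (Xb i)) Aed = 0.
  rewrite count_map; apply/eqP; rewrite -leqn0; apply: (@count_le_r _ _ _ [::]).
    by rewrite enum_uniq.
  by move=> z _ /=; rewrite cross_set2 !inE /= eqxx.
have hB : count (cross (Xb i)) Bed <= 2.
  rewrite count_map; apply: (@count_le_r _ _ _ [:: i; ord_pred i]); first by rewrite enum_uniq.
  move=> z _ /=; rewrite cross_set2 !inE /=.
  case: (eqVneq z i) => [-> //|nz] /=.
  by case: (boolP (ordS z == i)) => // /eqP <- _; rewrite ordSK eqxx.
have hC : count (cross (Xb i)) (enum (canon_match k)) = 0.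
  apply/eqP; rewrite -leqn0; apply: (@count_le_r _ _ _ [::]); first by rewrite enum_uniq.
  move=> z; rewrite mem_enum => /imsetP [j _ ->].
  by rewrite cross_set2 !inE /= eqxx.
rewrite H_edgesE !count_cat hA hC; lia.
Qed.

Lemma pair_canon (i : 'I_k) : 3 <= count (pred1 [set p i; p' i]) (H_edges (canon_match k)).
Proof.
have hA : 1 <= count (pred1 [set p i; p' i]) Aed.
  rewrite count_map; apply: (@count_ge_r _ _ _ [:: i]) => // z; rewrite inE => /eqP ->.
  by rewrite mem_enum /= eqxx.
have hC : 1 <= count (pred1 [set p i; p' i]) (enum (canon_match k)).
  apply: (@count_ge_r _ _ _ [:: [set p i; p' i]]) => // z; rewrite inE => /eqP ->.
  by rewrite mem_enum /= eqxx; split => //; apply: imset_f.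
rewrite H_edgesE !count_cat; lia.
Qed.

Lemma ordS_neq (i : 'I_k) : 1 < k -> ordS i != i.
Proof.
move=> hk2; apply/eqP => /(congr1 val) /=.
case: (ltngtP i.+1 k) => [lt|gt|eq].
- by rewrite modn_small // => /eqP; rewrite -[X in _ == X]addn0 -addn1 eqn_add2l.
- by have := ltn_ord i; lia.
- by rewrite eq modnn => e; move: eq; rewrite -e; lia.
Qed.

Lemma ord_pred_neq (i : 'I_k) : 1 < k -> ord_pred i != i.
Proof.
move=> hk2; apply/eqP => e.
by have := ordS_neq (ord_pred i) hk2; rewrite ord_predK {1}e eqxx.
Qed.

Lemma partner (hcov : forall v : vert k, #|[set e in Et | v \in e]| = 1)
  (hE2 : forall e, e \in Et -> #|e| = 2) (v : vert k) :
  exists e w, [/\ e \in Et, e = [set v; w] & w != v].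
Proof.
have /cards1P [e he] : #|[set e in Et | v \in e]| == 1 by rewrite hcov.
have : e \in [set e in Et | v \in e] by rewrite he set11.
rewrite inE => /andP [heEt hve].
have /cards2P [a [b [hab eab]]] : #|e| == 2 by rewrite hE2.
move: hve; rewrite eab !inE => /orP [/eqP ->|/eqP ->].
- by exists e, b; split => //; rewrite eq_sym.
- by exists e, a; split => //; rewrite eab setUC.
Qed.

Lemma cross4 (hcov : forall v : vert k, #|[set e in Et | v \in e]| = 1)
  (hE2 : forall e, e \in Et -> #|e| = 2) i :
  [set p i; p' i] \notin Et -> 1 < k /\ 4 <= count (cross (Xb i)) (H_edges Et).
Proof.
move=> hni.
have [e [w [he ew hw]]] := partner hcov hE2 (p i).
have [e' [w' [he' ew' hw']]] := partner hcov hE2 (p' i).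
have hw1 : w.1 != i.
  apply/eqP => e1; suff ew2 : w = p' i by move: hni; rewrite -ew2 -ew he.
  clear ew; move: hw e1; case: w => j2 [] /= h e2; subst j2; first by [].
  by move: h; rewrite eqxx.
have hw1' : w'.1 != i.
  apply/eqP => e1; suff ew2 : w' = p i by move: hni; rewrite -ew2 setUC -ew' he'.
  clear ew'; move: hw' e1; case: w' => j2 [] /= h e2; subst j2; last by [].
  by move: h; rewrite eqxx.
have hk2 : 1 < k.
  have := ltn_ord i; have := ltn_ord w.1; move: hw1; rewrite -(inj_eq val_inj) /=; lia.
split => //.
have hee : e != e'.
  apply/eqP => ee; have : p' i \in e by rewrite ee ew' set21.
  rewrite ew !inE => /orP [/eqP|/eqP ew2]; first by move/eqP; rewrite eq_sym (negbTE (p_neq i i)).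
  by move: hw1; rewrite -ew2 eqxx.
have hB : 2 <= count (cross (Xb i)) Bed.
  rewrite count_map; apply: (@count_ge_r _ _ _ [:: i; ord_pred i]).
    by rewrite /= inE eq_sym (ord_pred_neq i hk2).
  move=> z; rewrite !inE => /orP [/eqP ->|/eqP ->]; rewrite mem_enum; split => //=;
    rewrite cross_set2 !inE /=.
  - by rewrite eqxx (negbTE (ordS_neq i hk2)).
  - by rewrite ord_predK eqxx (negbTE (ord_pred_neq i hk2)).
have hC : 2 <= count (cross (Xb i)) (enum Et).
  apply: (@count_ge_r _ _ _ [:: e; e']); first by rewrite /= inE hee.
  move=> z; rewrite !inE => /orP [/eqP ->|/eqP ->]; rewrite mem_enum; split => //.
  - by rewrite ew cross_set2 !inE /= eqxx (negbTE hw1).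
  - by rewrite ew' cross_set2 !inE /= eqxx (negbTE hw1').
rewrite H_edgesE !count_cat; lia.
Qed.

End G.
Lemma modsub x k : k <= x -> x < k + k -> x %% k = x - k.
Proof. move=> h1 h2; rewrite -{1}(subnK h1) modnDr modn_small //; lia. Qed.
Lemma a1 i m k : i < k -> 0 < m -> m < k -> (i + m) %% k != i.
Proof.
move=> h1 h2 h3; case: (ltnP (i + m) k) => h.
  rewrite modn_small //; apply/eqP; lia.
rewrite modsub //; [apply/eqP; lia | lia].
Qed.
Lemma a2 i j k : i < k -> j < k -> (i + (j + k - i) %% k) %% k = j.
Proof. move=> h1 h2; rewrite modnDmr. have -> : i + (j + k - i) = j + k by lia. by rewrite modnDr modn_small. Qed.
Lemma a3 i j k : i < k -> j < k -> j != i -> 0 < (j + k - i) %% k.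
Proof.
move=> h1 h2 /eqP h3; case: (ltnP (j + k - i) k) => h.
  rewrite modn_small //; lia.
rewrite modsub //; lia.
Qed.
Lemma a4 i j k : i < k -> j < k -> (j + k - i) %% k < k.
Proof. move=> h1 h2; rewrite ltn_mod; lia. Qed.

Lemma connH k (Et : {set {set vert k}}) (i : 'I_k) (S : vert k -> Prop) :
  (exists v, v \notin Xb i /\ S v) ->
  (forall v w, S v -> w \notin Xb i -> [set v; w] \in H_edges Et -> S w) ->
  forall w, w \notin Xb i -> S w.
Proof.
move=> [v0 [hv0 Sv0]] clos.
have hk : 0 < k by apply: leq_ltn_trans (ltn_ord i).
pose blk m : 'I_k := Ordinal (ltn_pmod (i + m) hk).
have blkS : forall m, ordS (blk m) = blk m.+1.
  by move=> m; apply: val_inj; rewrite /= -addn1 modnDml addn1 addnS.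
have blkN : forall m, 0 < m -> m < k -> blk m != i.
  move=> m h1 h2; rewrite -(inj_eq val_inj) /=; exact: a1.
have blkO : forall j : 'I_k, blk ((j + k - i) %% k) = j.
  by move=> j; apply: val_inj; rewrite /= a2.
have notX : forall (j : 'I_k) b, j != i -> (j, b) \notin Xb i.
  by move=> j b hj; rewrite !inE /=.
have part : forall j : 'I_k, j != i -> S (p j) <-> S (p' j).
  move=> j hj; split => h.
  - by apply: (clos _ _ h); [apply: notX | apply: memA].
  - by apply: (clos _ _ h); [apply: notX | rewrite setUC; apply: memA].
pose BS m := S (p (blk m)) /\ S (p' (blk m)).
have fwd : forall m, 0 < m -> m.+1 < k -> BS m -> BS m.+1.
  move=> m h1 h2 [_ h]; have hn : blk m.+1 != i by apply: blkN.
  have : S (p (blk m.+1)).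
    by rewrite -blkS; apply: (clos _ _ h); [rewrite blkS; apply: notX | apply: memB].
  by move=> hs; split => //; rewrite -part.
have bwd : forall m, 1 < m -> m < k -> BS m -> BS m.-1.
  move=> m h1 h2 [h _]; have hn : blk m.-1 != i by apply: blkN; lia.
  have : S (p' (blk m.-1)).
    apply: (clos _ _ h); first by apply: notX.
    by rewrite setUC -(prednK (ltnW h1)) -blkS; apply: memB.
  by move=> hs; split => //; rewrite part.
have start : forall (j : 'I_k) b, j != i -> S (j, b) -> BS ((j + k - i) %% k).
  move=> j b hj hs; rewrite /BS blkO.
  case: b hs => hs; [split => //; rewrite part // | split => //; rewrite -part //].
have allBS : forall m0 m, 0 < m0 < k -> BS m0 -> 0 < m < k -> BS m.
  move=> m0 m /andP [a0 b0] h0 /andP [a b].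
  case: (leqP m0 m) => hm.
  - have F : forall d, m0 + d < k -> BS (m0 + d).
      elim => [|d IH] hd; first by rewrite addn0.
      by rewrite addnS; apply: fwd; [lia|lia|apply: IH; lia].
    have -> : m = m0 + (m - m0) by lia.
    apply: F; lia.
  - have F : forall d, d < m0 -> BS (m0 - d).
      elim => [|d IH] hd; first by rewrite subn0.
      have -> : m0 - d.+1 = (m0 - d).-1 by lia.
      by apply: bwd; [lia|lia|apply: IH; lia].
    have -> : m = m0 - (m0 - m) by lia.
    apply: F; lia.
move=> [j b] hw.
have hj : j != i by move: hw; rewrite !inE.
have hv0' : v0.1 != i by move: hv0; rewrite !inE.
have h0 := start _ v0.2 hv0' (ltac:(by case: v0 hv0 Sv0 {hv0'})).
have r0 : 0 < (v0.1 + k - i) %% k < k by rewrite a3 ?a4.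
have r1 : 0 < (j + k - i) %% k < k by rewrite a3 ?a4.
have [H1 H2] := allBS _ _ r0 h0 r1.
by move: H1 H2; rewrite blkO; clear hw; case: b.
Qed.

Lemma alt_link (V : eqType) (xs : seq V) (x0 : V) u v :
  alternate xs u v <-> altY (size xs) (fun t => nth x0 xs (t %% size xs)) u v.
Proof.
have e : forall t (d : V), t < size xs -> nth d xs t = nth x0 xs (t %% size xs).
  by move=> t d ht; rewrite modn_small // (set_nth_default x0).
split.
- move=> [i [j [l [m [[h1 h2 h3 h4] H]]]]]; exists i, j, l, m; split => //.
  rewrite -!(e _ u); [exact: H|lia|lia|lia|lia].
- move=> [i [j [l [m [[h1 h2 h3 h4] H]]]]]; exists i, j, l, m; split => //.
  rewrite !(e _ u); [exact: H|lia|lia|lia|lia].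
Qed.

Theorem mainTheorem2 (k : nat) (hk : 1 <= k) (Et : {set {set vert k}})
  (hEt_edges : forall e, e \in Et -> #|e| = 2)
  (hEt_card : #|Et| = k)
  (hEt_cover : forall v : vert k, #|[set e in Et | v \in e]| = 1)
  (xs : seq (vert k)) (es : seq nat)
  (hU : eulerian_tour (H_edges Et) xs es) :
  (forall u v : vert k, alternance xs u v <-> G_B u v) <-> Et = canon_match k.
Proof.
have E2 := E2H hEt_edges.
have hsz : size xs = 4 * k.
  case: hU => hp ha; rewrite -(sizeH hk hEt_card); have := perm_size hp; rewrite size_iota => <-.
  by move: ha; rewrite all2E => /andP [/eqP -> _]; rewrite size_zip size_rot minnn.
pose x0 : vert k := (Ordinal hk, false).
set n := size xs in hsz.
pose y := fun t => nth x0 xs (t %% n).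
have hf : frame (H_edges Et) n y.
  by apply: (tour_frame x0 E2 _ hU); rewrite -/n hsz; lia.
have hc : forall v, cnt n y v = 2.
  by move=> v; have := f_deg hf v; rewrite degH //; lia.
have link : forall u v, alternance xs u v <-> u <> v /\ altY n y u v.
  by move=> u v; rewrite /alternance (alt_link xs x0).
have hyn : y n = y 0 by rewrite -(f_per hf 0) add0n.
split.
- move=> H.
  have hinj : injective (fun i : 'I_k => [set p i; p' i]).
    move=> i j /= e; have : p i \in [set p j; p' j] by rewrite -e set21.
    by rewrite !inE /p /p' !xpair_eqE /= andbT andbF orbF => /eqP.
  apply/eqP; rewrite eq_sym eqEcard; apply/andP; split; last first.
    by rewrite card_imset // card_ord hEt_card.
  apply/subsetP => e /imsetP [i _ ->]; apply/negPn/negP => hni; exfalso.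
  have [hk2 h4] := cross4 hk hEt_cover hEt_edges hni.
  have [r hr yr] := cnt_pos (ltac:(by rewrite hc) : 0 < cnt n y (p i)).
  have hf' := frame_shift r hf.
  have hper := f_per hf.
  have hc' : forall v, cnt n (fun t => y (t + r)) v = 2.
    by move=> v; have := f_deg hf' v; rewrite degH //; lia.
  have hGB : forall u w, u != w -> altY n y u w -> u.1 = w.1.
    move=> u w huw ha; have := (H u w).1; rewrite link => h.
    have huw' : u <> w by apply/eqP.
    by case: (h (conj huw' ha)).
  have := arc hf' (X := Xb i) _ hc'.
  rewrite -(f_cross hf') => h2.
  suff : count (cross (Xb i)) (H_edges Et) <= 2 by lia.
  apply: h2.
  - by rewrite add0n yr !inE.
  - move=> u w; rewrite !inE => hu hw ha.
    have huw : u != w by apply/eqP => ee; move: hu hw; rewrite ee => ->.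
    have := hGB u w huw (proj2 (altY_shift u w r hper) ha).
    by move=> ee; move: hw; rewrite -ee hu.
  - move=> c d; rewrite !inE => hcX hdX hcd.
    apply/(altY_shift c d r hper).
    have := (H c d).2; rewrite link => h.
    case: (h _) => //; split; first by apply/eqP.
    by rewrite (eqP hcX) (eqP hdX).
  - exact: connH.
- move=> eEt; subst Et.
  move=> u v; rewrite link; split.
  + move=> [huv ha]; split => //.
    case: (eqVneq u.1 v.1) => // hne; exfalso.
    have h2 := cross_canon hk u.1.
    rewrite (f_cross hf) in h2.
    move: ha => [i [j [l [m [[h1 h1' h1'' h1'''] H]]]]].
    have hu : u \in Xb u.1 by rewrite !inE.
    have hv : v \notin Xb u.1 by rewrite !inE eq_sym.
    have : 4 <= ch (fun t => y t \in Xb u.1) 0 n.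
      case: H => [[a1 [a2 [a3 a4]]]|[a1 [a2 [a3 a4]]]].
      * apply: (@ch_four _ n i j l m) => //; rewrite ?hyn ?a1 ?a2 ?a3 ?a4 ?hu ?(negbTE hv) //.
      * apply: (@ch_four _ n i j l m) => //; rewrite ?hyn ?a1 ?a2 ?a3 ?a4 ?hu ?(negbTE hv) //.
    lia.
  + move=> [huv he]; split => //.
    have h3 : 3 <= n by lia.
    have hab := alt_block hf h3 (p_neq u.1 u.1) (hc _) (pair_canon hk u.1).
    move: huv he hab; case: u => i []; case: v => j [] /= huv he; subst j => hab.
    * by case: huv.
    * exact: altY_sym.
    * exact: hab.
    * by case: huv.
Qed.
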